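(* Let $G$ be a Garside group with Garside monoid $M$, let $a\in G$, let $u,v\in C^{sum}(a)$ and let $x\in M$ with $x^{-1}ux=v$. Then there exist an integer $k\geq 1$, elements $u=u_1,u_2,\ldots,u_k=v$ of $C^{sum}(a)$, and simple elements $s_1,\ldots,s_{k-1}$ such that $x=s_1s_2\cdots s_{k-1}$ and, for each $i=1,\ldots,k-1$, $s_i\in S^{sum}_{u_i}$ and $s_i^{-1}u_is_i=u_{i+1}$ (i.e. $u_is_i=s_iu_{i+1}$).
   Context: A Garside monoid $M$ is an atomic (generated by atoms, with a bound on the number of atoms in any factorization of each element), left and right cancellative monoid in which every pair of elements has left and right lcm's and gcd's, and which has a Garside element $\Delta$ whose left divisors coincide with its right divisors, form a finite set and generate $M$. $G$ is its group of fractions, which contains $M$. The prefix order on $G$: $a\preceq b$ iff $a^{-1}b\in M$. Simple elements are the divisors of $\Delta$ in $M$; $S$ denotes the (finite) set of simple elements. For $x\in G$, $\inf(x)=\max\{r\in\mathbb Z:\Delta^r\preceq x\}$ and $\sup(x)=\min\{r\in\mathbb Z: x\preceq \Delta^r\}$. The summit class $C^{sum}(a)$ of $a\in G$ is the set of conjugates of $a$ in $G$ whose $\inf$ is maximal and whose $\sup$ is minimal among all conjugates of $a$ (a nonempty finite set). For $v\in C^{sum}(a)$, $S^{sum}_v$ denotes the set of minimal elements, with respect to $\preceq$, of $\{s\in S\setminus\{1\}:\ s^{-1}vs\in C^{sum}(a)\}$ (the minimal simple elements for $v$). *)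

(* Defs.v *)
From Stdlib Require Import ZArith List Lia.
Import ListNotations.

Set Implicit Arguments.

Record Group := {
  carrier :> Type;
  gmul : carrier -> carrier -> carrier;
  ginv : carrier -> carrier;
  gone : carrier;
  gmulA : forall a b c, gmul a (gmul b c) = gmul (gmul a b) c;
  gmul1l : forall a, gmul gone a = a;
  gmul1r : forall a, gmul a gone = a;
  gmulVl : forall a, gmul (ginv a) a = gone;
  gmulVr : forall a, gmul a (ginv a) = gone
}.

Section Defs.
Variable G : Group.
Local Notation "a * b" := (gmul G a b).
Local Notation "a ^-1" := (ginv G a) (at level 3, format "a ^-1").
Local Notation "1" := (gone G).

Definition gprod (l : list G) : G := fold_right (gmul G) 1 l.

Fixpoint gpow (x : G) (n : nat) : G :=
  match n with O => 1 | S n => x * gpow x n end.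
Definition gzpow (x : G) (r : Z) : G :=
  match r with
  | Z0 => 1
  | Zpos p => gpow x (Pos.to_nat p)
  | Zneg p => (gpow x (Pos.to_nat p))^-1
  end.

Variable M : G -> Prop.   (* the monoid M, viewed inside G *)

Definition prefix (a b : G) : Prop := M (a^-1 * b).
Definition suffix (a b : G) : Prop := M (b * a^-1).

Definition is_atom (x : G) : Prop :=
  M x /\ x <> 1 /\
  forall b c, M b -> M c -> x = b * c -> b = 1 \/ c = 1.

Definition has_lcms (R : G -> G -> Prop) : Prop :=
  forall a b, M a -> M b ->
    exists c, M c /\ R a c /\ R b c /\
      forall d, M d -> R a d -> R b d -> R c d.
Definition has_gcds (R : G -> G -> Prop) : Prop :=
  forall a b, M a -> M b ->
    exists c, M c /\ R c a /\ R c b /\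
      forall d, M d -> R d a -> R d b -> R d c.

Definition generates_group : Prop :=
  forall P : G -> Prop,
    (forall m, M m -> P m) ->
    (forall x y, P x -> P y -> P (x * y)) ->
    (forall x, P x -> P (x^-1)) ->
    forall g, P g.

(** M is a Garside monoid with Garside element Delta, and G is its group of
    fractions (M is a submonoid of G generating G as a group).  Cancellativity
    of M is automatic since M sits inside a group. *)
Definition is_garside (Delta : G) : Prop :=
  M 1 /\ (forall a b, M a -> M b -> M (a * b)) /\
  generates_group /\
  (forall x, M x -> exists l, Forall is_atom l /\ x = gprod l) /\
  (forall x, M x -> exists N : nat, forall l,
        Forall is_atom l -> x = gprod l -> length l <= N) /\
  has_lcms prefix /\ has_gcds prefix /\ has_lcms suffix /\ has_gcds suffix /\
  M Delta /\
  (forall s, M s -> (prefix s Delta <-> suffix s Delta)) /\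
  (exists l : list G, forall s, (M s /\ prefix s Delta) <-> In s l) /\
  (forall x, M x -> exists l,
        Forall (fun s => M s /\ prefix s Delta) l /\ x = gprod l).

Variable Delta : G.

Definition simple (s : G) : Prop := M s /\ prefix s Delta.

Definition is_inf (x : G) (r : Z) : Prop :=
  prefix (gzpow Delta r) x /\
  forall r', prefix (gzpow Delta r') x -> (r' <= r)%Z.
Definition is_sup (x : G) (r : Z) : Prop :=
  prefix x (gzpow Delta r) /\
  forall r', prefix x (gzpow Delta r') -> (r <= r')%Z.

Definition conjugate (a w : G) : Prop := exists g, w = g^-1 * a * g.

Definition Csum (a v : G) : Prop :=
  conjugate a v /\
  exists i s, is_inf v i /\ is_sup v s /\
    forall w j t, conjugate a w -> is_inf w j -> is_sup w t ->
      (j <= i)%Z /\ (s <= t)%Z.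

Definition Ssum_cand (a v s : G) : Prop :=
  simple s /\ s <> 1 /\ Csum a (s^-1 * v * s).
Definition Ssum (a v s : G) : Prop :=
  Ssum_cand a v s /\ forall t, Ssum_cand a v t -> prefix t s -> t = s.

End Defs.

(* Main.v *)
Require Import Defs.
From Stdlib Require Import ZArith List Lia Classical.
Import ListNotations.
Set Implicit Arguments.

Section Garside.
Variable G : Group.
Local Notation "a * b" := (gmul G a b).
Local Notation "a ^-1" := (ginv G a) (at level 3, format "a ^-1").
Local Notation "1" := (gone G).

Lemma mulVK (a b : G) : a^-1 * (a * b) = b.
Proof. rewrite gmulA, gmulVl, gmul1l; reflexivity. Qed.
Lemma mulKV (a b : G) : a * (a^-1 * b) = b.
Proof. rewrite gmulA, gmulVr, gmul1l; reflexivity. Qed.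
Lemma inv_uniq (a b : G) : a * b = 1 -> b = a^-1.
Proof. intro H. rewrite <- (mulVK a b), H, gmul1r. reflexivity. Qed.
Lemma invM (a b : G) : (a * b)^-1 = b^-1 * a^-1.
Proof. symmetry. apply inv_uniq. rewrite <- gmulA, (gmulA G b), gmulVr, gmul1l, gmulVr. reflexivity. Qed.
Lemma invK (a : G) : a^-1^-1 = a.
Proof. symmetry. apply inv_uniq. apply gmulVl. Qed.
Lemma inv1 : 1^-1 = 1.
Proof. symmetry. apply inv_uniq. apply gmul1l. Qed.
Lemma mulVK2 (a : G) : a * a^-1 = 1. Proof. apply gmulVr. Qed.

Hint Rewrite <- (gmulA G) : gdb.
Hint Rewrite (gmul1l G) (gmul1r G) (gmulVl G) (gmulVr G) mulVK mulKV invM invK inv1 : gdb.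
Ltac gsimpl := autorewrite with gdb in *.
Ltac gsimplg := autorewrite with gdb.


Variable M : G -> Prop.
Variable Delta : G.
Hypothesis HG : is_garside G M Delta.
Local Notation pre := (prefix G M).
Local Notation D := Delta.
Ltac dHG := let H := fresh in pose proof HG as H; unfold is_garside in H; decompose [and] H; clear H.

Lemma M1 : M 1. Proof. dHG; eauto. Qed.
Lemma Mmul a b : M a -> M b -> M (a * b). Proof. dHG; eauto. Qed.
Lemma Hgen : generates_group G M. Proof. dHG; eauto. Qed.
Lemma atom_fact x : M x -> exists l, Forall (is_atom G M) l /\ x = gprod G l. Proof. dHG; eauto. Qed.
Lemma bound_ex x : M x -> exists N : nat, forall l,
        Forall (is_atom G M) l -> x = gprod G l -> length l <= N. Proof. dHG; eauto. Qed.
Lemma gcd_ex : has_gcds G M pre. Proof. dHG; eauto. Qed.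
Lemma MD : M D. Proof. dHG; eauto. Qed.
Lemma Hps s : M s -> (pre s D <-> suffix G M s D). Proof. dHG; eauto. Qed.
Lemma simp_fact x : M x -> exists l, Forall (simple G M D) l /\ x = gprod G l.
Proof. dHG; eauto. Qed.

Lemma gprod_app l1 l2 : gprod G (l1 ++ l2) = gprod G l1 * gprod G l2.
Proof. induction l1; simpl. - gsimplg; reflexivity. - unfold gprod in *. simpl. rewrite IHl1. gsimplg. reflexivity. Qed.

Lemma gprod_cons c l : gprod G (c :: l) = c * gprod G l.
Proof. reflexivity. Qed.

Lemma gprod_M l : Forall M l -> M (gprod G l).
Proof. induction 1. apply M1. rewrite gprod_cons. apply Mmul; auto. Qed.

Lemma pre_refl a : pre a a.
Proof. unfold prefix. gsimplg. apply M1. Qed.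
Lemma pre_trans a b c : pre a b -> pre b c -> pre a c.
Proof. unfold prefix. intros H1 H2. replace (a^-1 * c) with ((a^-1 * b) * (b^-1 * c)). apply Mmul; auto. gsimplg; reflexivity. Qed.

Fixpoint rep (L : list G) (n : nat) : list G :=
  match n with O => [] | S n => L ++ rep L n end.

Lemma rep_prod L n : gprod G L = 1 -> gprod G (rep L n) = 1.
Proof. intro H. induction n; simpl. reflexivity. rewrite gprod_app, H, IHn. gsimplg. reflexivity. Qed.
Lemma rep_len L n : L <> [] -> n <= length (rep L n).
Proof. intro H. induction n; simpl. lia. rewrite length_app. destruct L. congruence. simpl. lia. Qed.
Lemma rep_forall (P : G -> Prop) L n : Forall P L -> Forall P (rep L n).
Proof. intro H. induction n; simpl. constructor. apply Forall_app; auto. Qed.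

Lemma no_units e : M e -> M (e^-1) -> e = 1.
Proof.
  intros He Hi. apply NNPP. intro Hne.
  destruct (atom_fact He) as [l [Hl El]].
  destruct (atom_fact Hi) as [l2 [Hl2 El2]].
  destruct (bound_ex M1) as [N HN].
  assert (Hp : gprod G (l ++ l2) = 1). { rewrite gprod_app, <- El, <- El2. apply gmulVr. }
  assert (Hne2 : l ++ l2 <> []). { destruct l. simpl in El. congruence. simpl. congruence. }
  specialize (HN (rep (l ++ l2) (S N))).
  assert (length (rep (l ++ l2) (S N)) <= N).
  { apply HN. apply rep_forall. apply Forall_app; auto. symmetry. apply rep_prod; auto. }
  pose proof (rep_len (S N) Hne2). lia.
Qed.

Local Notation P n := (gpow G D n).

Lemma tau_simple s : simple G M D s -> M (D^-1 * s * D) /\ M (D * s * D^-1).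
Proof.
  intros [Hs Hp]. pose proof (proj1 (Hps Hs) Hp) as Hsuf.
  unfold prefix, suffix in *. split.
  - assert (Ht : M (s^-1 * D)) by exact Hp.
    assert (Hsf : suffix G M (s^-1 * D) D). { unfold suffix. gsimplg. exact Hs. }
    pose proof (proj2 (Hps Ht) Hsf) as H2. unfold prefix in H2. gsimpl.
    replace (D^-1 * s * D) with (D^-1 * (s * D)) by (gsimplg; reflexivity). exact H2.
  - assert (Hq : pre (D * s^-1) D). { unfold prefix. gsimplg. exact Hs. }
    pose proof (proj1 (Hps Hsuf) Hq) as H2. unfold suffix in H2. gsimpl.
    replace (D * s * D^-1) with (D * (s * D^-1)) by (gsimplg; reflexivity). exact H2.
Qed.

Lemma tau_M m : M m -> M (D^-1 * m * D) /\ M (D * m * D^-1).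
Proof.
  intro Hm. destruct (simp_fact Hm) as [l [Hl ->]]. clear Hm.
  induction Hl as [|s l Hs Hl IH].
  - simpl. gsimplg. split; apply M1.
  - rewrite gprod_cons. destruct IH as [IH1 IH2]. destruct (tau_simple Hs) as [S1 S2].
    split.
    + replace (D^-1 * (s * gprod G l) * D) with ((D^-1 * s * D) * (D^-1 * gprod G l * D))
        by (gsimplg; reflexivity). apply Mmul; auto.
    + replace (D * (s * gprod G l) * D^-1) with ((D * s * D^-1) * (D * gprod G l * D^-1))
        by (gsimplg; reflexivity). apply Mmul; auto.
Qed.

Lemma gpow_S n : P (S n) = D * P n. Proof. reflexivity. Qed.
Lemma gpow_add n m : P (n + m) = P n * P m.
Proof. induction n; simpl. gsimplg; reflexivity. rewrite IHn. gsimplg. reflexivity. Qed.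
Lemma gpow_M n : M (P n).
Proof. induction n; simpl. apply M1. apply Mmul; auto. apply MD. Qed.
Lemma gpow_comm n : D * P n = P n * D.
Proof. change (D * P n) with (P (1 + n)). rewrite Nat.add_comm, gpow_add. simpl. gsimplg. reflexivity. Qed.

Lemma tau_pow n m : M m -> M ((P n)^-1 * m * P n) /\ M (P n * m * (P n)^-1).
Proof.
  revert m. induction n; intros m Hm; simpl.
  - gsimplg. split; auto.
  - destruct (tau_M Hm) as [T1 T2]. destruct (IHn _ T1) as [A1 _]. destruct (IHn _ T2) as [_ A2].
    split.
    + replace ((D * P n)^-1 * m * (D * P n)) with ((P n)^-1 * (D^-1 * m * D) * P n)
        by (gsimplg; reflexivity). auto.
    + replace (D * P n * m * (D * P n)^-1) with (D * (P n * m * (P n)^-1) * D^-1)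
        by (gsimplg; reflexivity). apply tau_M. apply (IHn _ Hm).
Qed.

Local Notation Z' r := (gzpow G D r).

Lemma Z_nat_cases (z : Z) : exists n, z = Z.of_nat n \/ z = (- Z.of_nat n)%Z.
Proof. destruct (Z.le_gt_cases 0 z). exists (Z.to_nat z). left. lia. exists (Z.to_nat (- z)). right. lia. Qed.

Lemma gzpow_nat n : Z' (Z.of_nat n) = P n.
Proof. destruct n. reflexivity. simpl. rewrite SuccNat2Pos.id_succ. reflexivity. Qed.
Lemma gzpow_negnat n : Z' (- Z.of_nat n) = (P n)^-1.
Proof. destruct n. simpl. gsimplg. reflexivity. simpl. rewrite SuccNat2Pos.id_succ. reflexivity. Qed.
Lemma gzpow_opp r : Z' (- r) = (Z' r)^-1.
Proof. destruct r; simpl. gsimplg; reflexivity. reflexivity. gsimplg; reflexivity. Qed.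

Lemma tau_z r m : M m -> M ((Z' r)^-1 * m * Z' r) /\ M (Z' r * m * (Z' r)^-1).
Proof.
  intro Hm. destruct (Z_nat_cases r) as [n [-> | ->]].
  - rewrite gzpow_nat. apply tau_pow; auto.
  - rewrite gzpow_negnat. gsimplg. destruct (tau_pow n Hm) as [A B].
    split; [ replace (P n * (m * (P n)^-1)) with (P n * m * (P n)^-1) by (gsimplg; reflexivity)
           | replace ((P n)^-1 * (m * P n)) with ((P n)^-1 * m * P n) by (gsimplg; reflexivity)]; auto.
Qed.

Lemma gzpow_comm r : D * Z' r = Z' r * D.
Proof.
  destruct (Z_nat_cases r) as [n [-> | ->]].
  - rewrite gzpow_nat. apply gpow_comm.
  - rewrite gzpow_negnat. pose proof (gpow_comm n) as H.
    apply (f_equal (fun g => (P n)^-1 * g * (P n)^-1)) in H. gsimpl.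
    rewrite <- H. gsimplg. reflexivity.
Qed.

Lemma pow_unit k : 1 <= k -> M ((P k)^-1) -> D = 1.
Proof.
  intros Hk H. pose proof (no_units (gpow_M k) H) as H1.
  destruct k. lia. rewrite gpow_S in H1. apply inv_uniq in H1.
  apply no_units. apply MD. rewrite <- H1. apply gpow_M.
Qed.

Lemma pow_le a b : D <> 1 -> pre (Z' a) (Z' b) -> (a <= b)%Z.
Proof.
  intros HD H. unfold prefix in H. apply Z.nlt_ge. intro Hab. apply HD.
  destruct (Z_nat_cases a) as [n [-> | ->]]; destruct (Z_nat_cases b) as [m [-> | ->]].
  - rewrite !gzpow_nat in H. replace n with (m + (n - m)) in H by lia.
    rewrite gpow_add in H. gsimpl. apply (pow_unit (k := n - m)); auto. lia.
  - rewrite gzpow_nat, gzpow_negnat in H. apply (pow_unit (k := m + n)). lia.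
    rewrite gpow_add. gsimplg. exact H.
  - lia.
  - rewrite !gzpow_negnat in H. replace m with ((m - n) + n) in H by lia.
    rewrite gpow_add in H. gsimpl. apply (pow_unit (k := m - n)); auto. lia.
Qed.

Lemma gz_one : D = 1 -> forall r, Z' r = 1.
Proof.
  intros HD r. assert (Hp : forall n, P n = 1).
  { induction n; simpl. reflexivity. rewrite IHn, HD. gsimplg. reflexivity. }
  destruct (Z_nat_cases r) as [n [-> | ->]].
  rewrite gzpow_nat; auto. rewrite gzpow_negnat, Hp. gsimplg. reflexivity.
Qed.

Lemma inf_nontriv u i : is_inf G M D u i -> D <> 1.
Proof.
  intros [H1 H2] HD. assert (H3 : (i + 1 <= i)%Z); [|lia].
  apply H2. rewrite (gz_one HD). rewrite (gz_one HD) in H1. exact H1.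
Qed.

Lemma inv_lift m : M m -> exists K, M (P K * m^-1).
Proof.
  intro Hm. destruct (simp_fact Hm) as [l [Hl ->]]. clear Hm.
  induction Hl as [|s l Hs Hl [K IH]].
  - exists 0. simpl. gsimplg. apply M1.
  - exists (S K). rewrite gprod_cons, gpow_S.
    destruct Hs as [Ms Ps]. pose proof (proj1 (Hps Ms) Ps) as Ss. unfold suffix in Ss.
    replace (D * P K * (s * gprod G l)^-1) with ((D * (P K * (gprod G l)^-1) * D^-1) * (D * s^-1))
      by (gsimplg; reflexivity).
    apply Mmul; auto. apply tau_M. exact IH.
Qed.

Lemma lift g : exists N, M (P N * g).
Proof.
  apply (Hgen (fun g => exists N, M (P N * g))).
  - intros m Hm. exists 0. simpl. gsimplg. exact Hm.
  - intros x y [N1 H1] [N2 H2]. exists (N2 + N1). rewrite gpow_add.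
    replace (P N2 * P N1 * (x * y)) with ((P N2 * (P N1 * x) * (P N2)^-1) * (P N2 * y))
      by (gsimplg; reflexivity).
    apply Mmul; auto. apply tau_pow. exact H1.
  - intros x [N H]. destruct (inv_lift H) as [K HK]. exists K.
    replace (P K * x^-1) with ((P K * (P N * x)^-1) * P N) by (gsimplg; reflexivity).
    apply Mmul; auto. apply gpow_M.
Qed.

Definition is_gcd (z x y : G) : Prop :=
  M z /\ pre z x /\ pre z y /\ forall d, M d -> pre d x -> pre d y -> pre d z.

Lemma g_below_gcd x y z g : M x -> M y -> is_gcd z x y -> pre g x -> pre g y -> pre g z.
Proof.
  intros Mx My [Mz [Zx [Zy Zmax]]] Gx Gy.
  destruct (lift g) as [N HN]. set (c := P N) in *.
  assert (Mc : M c) by apply gpow_M.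
  destruct (gcd_ex (Mmul Mc Mx) (Mmul Mc My)) as [d [Md [Dx [Dy Dmax]]]].
  assert (Hcg : pre (c * g) d).
  { apply Dmax; auto; unfold prefix in *; gsimplg; auto. }
  assert (Hcd : pre c d). { apply Dmax; auto; unfold prefix; gsimplg; auto. }
  unfold prefix in Hcd.
  assert (Hd' : pre (c^-1 * d) z).
  { apply Zmax; auto; unfold prefix in *; gsimpl; auto. }
  unfold prefix in *. gsimpl.
  replace (g^-1 * z) with ((g^-1 * (c^-1 * d)) * (d^-1 * (c * z))) by (gsimplg; reflexivity).
  apply Mmul; auto.
Qed.

Lemma conv_inf r u x y z : M x -> M y -> is_gcd z x y ->
  pre (Z' r) (x^-1 * u * x) -> pre (Z' r) (y^-1 * u * y) -> pre (Z' r) (z^-1 * u * z).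
Proof.
  intros Mx My Hz Hx Hy. pose proof Hz as [Mz [Zx [Zy _]]].
  set (E := Z' r) in *. set (w := E^-1 * u).
  assert (H : pre (w^-1 * (E^-1 * z * E)) z).
  { apply (g_below_gcd Mx My Hz).
    - apply (pre_trans (b := w^-1 * (E^-1 * x * E))).
      + unfold prefix in *. gsimplg.
        replace (E^-1 * (z^-1 * (x * E))) with (E^-1 * (z^-1 * x) * E) by (gsimplg; reflexivity).
        apply tau_z. exact Zx.
      + unfold prefix in *. subst w. gsimplg. gsimpl. exact Hx.
    - apply (pre_trans (b := w^-1 * (E^-1 * y * E))).
      + unfold prefix in *. gsimplg.
        replace (E^-1 * (z^-1 * (y * E))) with (E^-1 * (z^-1 * y) * E) by (gsimplg; reflexivity).
        apply tau_z. exact Zy.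
      + unfold prefix in *. subst w. gsimplg. gsimpl. exact Hy. }
  unfold prefix in *. subst w. gsimpl. exact H.
Qed.

Lemma conv_sup r u x y z : M x -> M y -> is_gcd z x y ->
  pre (x^-1 * u * x) (Z' r) -> pre (y^-1 * u * y) (Z' r) -> pre (z^-1 * u * z) (Z' r).
Proof.
  intros Mx My Hz Hx Hy.
  assert (K : forall t, pre (t^-1 * u * t) (Z' r) <-> pre (Z' (- r)) (t^-1 * u^-1 * t)).
  { intro t. rewrite gzpow_opp. unfold prefix. split; intro H.
    - pose proof (proj2 (tau_z r H)) as H2. gsimpl. exact H2.
    - pose proof (proj1 (tau_z r H)) as H2. gsimpl. exact H2. }
  apply K. apply K in Hx. apply K in Hy. exact (conv_inf (-r) (u^-1) Mx My Hz Hx Hy).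
Qed.

Lemma commD2 r X : D * (Z' r * X) = Z' r * (D * X).
Proof. rewrite !gmulA, gzpow_comm. reflexivity. Qed.
Lemma commD3 r X : (Z' r)^-1 * (D^-1 * X) = D^-1 * ((Z' r)^-1 * X).
Proof.
  rewrite !gmulA. f_equal. rewrite <- !invM. f_equal. apply gzpow_comm.
Qed.

Lemma Zmax_ex n (Q : Z -> Prop) i : Q i -> (forall r, Q r -> (r <= i + Z.of_nat n)%Z) ->
  exists m, Q m /\ forall r, Q r -> (r <= m)%Z.
Proof.
  intros Hi. induction n; intro Hb.
  - exists i. split; auto. intros r Hr. specialize (Hb r Hr). lia.
  - destruct (classic (Q (i + Z.of_nat (S n))%Z)) as [Hq|Hq].
    + exists (i + Z.of_nat (S n))%Z. split; auto.
    + apply IHn. intros r Hr. specialize (Hb r Hr).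
      assert (r <> (i + Z.of_nat (S n))%Z) by (intro; subst; auto). lia.
Qed.

Lemma Zmin_ex n (Q : Z -> Prop) i : Q i -> (forall r, Q r -> (i - Z.of_nat n <= r)%Z) ->
  exists m, Q m /\ forall r, Q r -> (m <= r)%Z.
Proof.
  intros Hi Hb. destruct (@Zmax_ex n (fun r => Q (- r)%Z) (- i)%Z) as [m [Hm Hmax]].
  - rewrite Z.opp_involutive. exact Hi.
  - intros r Hr. specialize (Hb _ Hr). lia.
  - exists (- m)%Z. split; auto. intros r Hr. specialize (Hmax (- r)%Z). rewrite Z.opp_involutive in Hmax.
    specialize (Hmax Hr). lia.
Qed.

Lemma inf_ex w i s : D <> 1 -> pre (Z' i) w -> pre w (Z' s) -> exists j, is_inf G M D w j.
Proof.
  intros HD Hi Hs.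
  assert (Hb : forall r, pre (Z' r) w -> (r <= s)%Z).
  { intros r Hr. apply pow_le; auto. eapply pre_trans; eauto. }
  pose proof (Hb _ Hi).
  destruct (@Zmax_ex (Z.to_nat (s - i)) (fun r => pre (Z' r) w) i Hi) as [m Hm].
  - intros r Hr. specialize (Hb _ Hr). lia.
  - exists m. exact Hm.
Qed.

Lemma sup_ex w i s : D <> 1 -> pre (Z' i) w -> pre w (Z' s) -> exists t, is_sup G M D w t.
Proof.
  intros HD Hi Hs.
  assert (Hb : forall r, pre w (Z' r) -> (i <= r)%Z).
  { intros r Hr. apply pow_le; auto. eapply pre_trans; eauto. }
  pose proof (Hb _ Hs).
  destruct (@Zmin_ex (Z.to_nat (s - i)) (fun r => pre w (Z' r)) s Hs) as [m Hm].
  - intros r Hr. specialize (Hb _ Hr). lia.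
  - exists m. exact Hm.
Qed.

Lemma Csum_vals a u v i s i1 s1 :
  Csum G M D a u -> Csum G M D a v -> is_inf G M D u i -> is_sup G M D u s ->
  is_inf G M D v i1 -> is_sup G M D v s1 -> i1 = i /\ s1 = s.
Proof.
  intros [Cu [i0 [s0 [Iu [Su Hu]]]]] [Cv [i2 [s2 [Iv [Sv Hv]]]]] I S I1 S1.
  assert (i0 = i). { destruct I as [A B], Iu as [A' B']. specialize (B _ A'). specialize (B' _ A). lia. }
  assert (s0 = s). { destruct S as [A B], Su as [A' B']. specialize (B _ A'). specialize (B' _ A). lia. }
  assert (i2 = i1). { destruct I1 as [A B], Iv as [A' B']. specialize (B _ A'). specialize (B' _ A). lia. }
  assert (s2 = s1). { destruct S1 as [A B], Sv as [A' B']. specialize (B _ A'). specialize (B' _ A). lia. }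
  subst. destruct (Hu _ _ _ Cv I1 S1). destruct (Hv _ _ _ Cu I S). lia.
Qed.

Lemma conj_conj a u g : conjugate G a u -> conjugate G a (g^-1 * u * g).
Proof. intros [h ->]. exists (h * g). gsimplg. reflexivity. Qed.

Lemma Csum_from a u w i s :
  Csum G M D a u -> is_inf G M D u i -> is_sup G M D u s -> conjugate G a w ->
  pre (Z' i) w -> pre w (Z' s) -> Csum G M D a w.
Proof.
  intros Cu Iu Su Cw Hi Hs. pose proof (inf_nontriv Iu) as HD.
  destruct (inf_ex i s HD Hi Hs) as [j Ij]. destruct (sup_ex i s HD Hi Hs) as [t St].
  pose proof Cu as [_ [i0 [s0 [Iu0 [Su0 Hu]]]]].
  destruct (Hu _ _ _ Cw Ij St) as [H1 H2].
  assert (i0 = i). { destruct Iu as [A B], Iu0 as [A' B']. specialize (B _ A'). specialize (B' _ A). lia. }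
  assert (s0 = s). { destruct Su as [A B], Su0 as [A' B']. specialize (B _ A'). specialize (B' _ A). lia. }
  subst i0 s0.
  assert (j = i). { destruct Ij as [A B]. specialize (B _ Hi). lia. }
  assert (t = s). { destruct St as [A B]. specialize (B _ Hs). lia. }
  subst. split; auto. exists i, s. split; auto.
Qed.

Lemma Csum_conv a u x y z : M x -> M y -> is_gcd z x y -> Csum G M D a u ->
  Csum G M D a (x^-1 * u * x) -> Csum G M D a (y^-1 * u * y) -> Csum G M D a (z^-1 * u * z).
Proof.
  intros Mx My Hz Cu Cx Cy.
  pose proof Cu as [Cu0 [i [s [Iu [Su _]]]]].
  pose proof Cx as [_ [i1 [s1 [Ix [Sx _]]]]].
  pose proof Cy as [_ [i2 [s2 [Iy [Sy _]]]]].
  destruct (Csum_vals Cu Cx Iu Su Ix Sx) as [-> ->].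
  destruct (Csum_vals Cu Cy Iu Su Iy Sy) as [-> ->].
  apply (Csum_from Cu Iu Su).
  - apply conj_conj; auto.
  - apply (conv_inf i u Mx My Hz); [apply Ix | apply Iy].
  - apply (conv_sup s u Mx My Hz); [apply Sx | apply Sy].
Qed.

Lemma Csum_D a w : Csum G M D a w -> Csum G M D a (D^-1 * w * D).
Proof.
  intro Cw. pose proof Cw as [Cw0 [i [s [[Iw Imax] [[Sw Smax] Hmax]]]]].
  assert (EI : forall r, pre (Z' r) w <-> pre (Z' r) (D^-1 * w * D)).
  { intro r. unfold prefix. split; intro H.
    - pose proof (proj1 (tau_M H)) as H2. gsimpl. rewrite commD3. exact H2.
    - pose proof (proj2 (tau_M H)) as H2. gsimpl. rewrite commD3 in H2. gsimpl. exact H2. }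
  assert (ES : forall r, pre w (Z' r) <-> pre (D^-1 * w * D) (Z' r)).
  { intro r. unfold prefix. split; intro H.
    - pose proof (proj1 (tau_M H)) as H2. gsimpl. rewrite gzpow_comm. exact H2.
    - pose proof (proj2 (tau_M H)) as H2. gsimpl. rewrite commD2 in H2. gsimpl. exact H2. }
  split. apply conj_conj; auto.
  exists i, s. split; [|split].
  - split. apply EI; auto. intros r Hr. apply Imax. apply EI. auto.
  - split. apply ES; auto. intros r Hr. apply Smax. apply ES. auto.
  - exact Hmax.
Qed.

Definition bnd (x : G) (n : nat) : Prop :=
  forall l, Forall (is_atom G M) l -> x = gprod G l -> length l <= n.

Lemma bnd_l p q n : bnd (p * q) n -> M p -> M q -> p <> 1 -> 1 <= n /\ bnd q (n - 1).
Proof.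
  intros Hb Mp Mq Hp. destruct (atom_fact Mp) as [lp [Alp Elp]].
  assert (lp <> []) by (intro; subst; simpl in Hp; auto).
  assert (Hlp : 1 <= length lp) by (destruct lp; [congruence | simpl; lia]).
  destruct (atom_fact Mq) as [lq [Alq Elq]].
  assert (H1 : length (lp ++ lq) <= n).
  { apply Hb. apply Forall_app; auto. rewrite gprod_app; congruence. }
  rewrite length_app in H1. split. lia.
  intros l Al El. assert (H2 : length (lp ++ l) <= n).
  { apply Hb. apply Forall_app; auto. rewrite gprod_app; congruence. }
  rewrite length_app in H2. lia.
Qed.

Lemma bnd_r p q n : bnd (p * q) n -> M p -> M q -> q <> 1 -> 1 <= n /\ bnd p (n - 1).
Proof.
  intros Hb Mp Mq Hq. destruct (atom_fact Mq) as [lq [Alq Elq]].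
  assert (lq <> []) by (intro; subst; simpl in Hq; auto).
  assert (Hlq : 1 <= length lq) by (destruct lq; [congruence | simpl; lia]).
  destruct (atom_fact Mp) as [lp [Alp Elp]].
  assert (H1 : length (lp ++ lq) <= n).
  { apply Hb. apply Forall_app; auto. rewrite gprod_app; congruence. }
  rewrite length_app in H1. split. lia.
  intros l Al El. assert (H2 : length (l ++ lq) <= n).
  { apply Hb. apply Forall_app; auto. rewrite gprod_app; congruence. }
  rewrite length_app in H2. lia.
Qed.

Lemma first_simple l : Forall (simple G M D) l -> gprod G l <> 1 ->
  exists s, simple G M D s /\ s <> 1 /\ pre s (gprod G l).
Proof.
  induction 1 as [|c l Hc Hl IH]; intro Hne.
  - simpl in Hne. congruence.
  - rewrite gprod_cons in *. destruct (classic (c = 1)) as [->|Hc1].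
    + rewrite gmul1l in *. destruct (IH Hne) as [s [S1 [S2 S3]]]. exists s. auto.
    + exists c. split; auto. split; auto. unfold prefix. gsimplg. apply gprod_M.
      eapply Forall_impl; [|exact Hl]. intros s [Hs _]. exact Hs.
Qed.

Lemma min_cand a u n : forall t0, bnd t0 n -> Ssum_cand G M D a u t0 ->
  exists t, Ssum_cand G M D a u t /\ pre t t0 /\
    forall t', Ssum_cand G M D a u t' -> pre t' t -> t' = t.
Proof.
  induction n; intros t0 Hb Hc.
  - exists t0. split; auto. split. apply pre_refl. intros t' Ht' Hp.
    apply NNPP. intro Hne. destruct Hc as [[Mt0 _] _]. destruct Ht' as [[Mt' _] _].
    unfold prefix in Hp. assert (E : t0 = t' * (t'^-1 * t0)) by (gsimplg; reflexivity).
    rewrite E in Hb. destruct (bnd_r Hb Mt' Hp) as [H _]. intro Hq. apply Hne.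
    apply (f_equal (fun g => t' * g)) in Hq. gsimpl. symmetry; exact Hq. lia.
  - destruct (classic (exists t', Ssum_cand G M D a u t' /\ pre t' t0 /\ t' <> t0)) as
      [[t' [Ht' [Hp Hne]]] | Hno].
    + destruct Hc as [[Mt0 _] _]. pose proof Ht' as [[Mt' _] _].
      unfold prefix in Hp. assert (E : t0 = t' * (t'^-1 * t0)) by (gsimplg; reflexivity).
      rewrite E in Hb. destruct (bnd_r Hb Mt' Hp) as [_ Hb'].
      { intro Hq. apply Hne. apply (f_equal (fun g => t' * g)) in Hq. gsimpl. symmetry; exact Hq. }
      simpl in Hb'. rewrite Nat.sub_0_r in Hb'.
      destruct (IHn t' Hb' Ht') as [t [T1 [T2 T3]]]. exists t. split; auto. split; auto.
      eapply pre_trans; eauto.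
    + exists t0. split; auto. split. apply pre_refl. intros t' Ht' Hp.
      apply NNPP. intro Hne. apply Hno. exists t'. auto.
Qed.

Lemma main a n : forall x u v, M x -> bnd x n -> Csum G M D a u -> Csum G M D a v ->
  x^-1 * u * x = v ->
  exists (k : nat) (u_ s_ : nat -> G),
    1 <= k /\ u_ 1%nat = u /\ u_ k = v /\
    (forall i, 1 <= i <= k -> Csum G M D a (u_ i)) /\
    (forall i, 1 <= i <= k - 1 -> simple G M D (s_ i)) /\
    x = gprod G (map s_ (seq 1 (k - 1))) /\
    (forall i, 1 <= i <= k - 1 ->
       Ssum G M D a (u_ i) (s_ i) /\ (s_ i)^-1 * (u_ i) * (s_ i) = u_ (i + 1)).
Proof.
  induction n; intros x u v Mx Hb Cu Cv Hxuv;
  (destruct (classic (x = 1)) as [Hx1 | Hx1];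
   [ subst x; gsimpl; subst v; exists 1%nat, (fun _ => u), (fun _ => 1);
     split; [lia|]; split; [reflexivity|]; split; [reflexivity|]; split; [auto|];
     split; [intros; lia|]; split; [reflexivity| intros; lia] | ]).
  - exfalso. destruct (atom_fact Mx) as [l [Al El]]. specialize (Hb l Al El).
    destruct l; simpl in *; [congruence | lia].
  -
    destruct (simp_fact Mx) as [lx [Slx Elx]].
    destruct (first_simple Slx) as [s [Ss [Ss1 Psx]]]. rewrite <- Elx; auto.
    rewrite <- Elx in Psx.
    destruct (gcd_ex Mx MD) as [z0 [Mz0 [Z0x [Z0D Z0max]]]].
    assert (Hg : is_gcd z0 x D) by (repeat split; auto).
    assert (Psz : pre s z0) by (apply Z0max; [apply Ss | auto | apply Ss]).
    assert (Hz1 : z0 <> 1).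
    { intro E. subst z0. unfold prefix in Psz. rewrite gmul1r in Psz. apply Ss1.
      apply no_units; auto. apply Ss. }
    assert (Cx : Csum G M D a (x^-1 * u * x)) by (rewrite Hxuv; auto).
    pose proof (Csum_conv Mx MD Hg Cu Cx (Csum_D Cu)) as Cz.
    assert (Cand0 : Ssum_cand G M D a u z0) by (split; [split; assumption | split; assumption]).
    destruct (bound_ex Mz0) as [N0 HN0].
    destruct (@min_cand a u N0 z0 HN0 Cand0) as [t [Ct [Ptz Tmin]]].
    pose proof Ct as [[Mt Pt] [Ht1 Cut]].
    pose proof (@pre_trans t z0 x Ptz Z0x) as Ptx.
    set (x' := t^-1 * x).
    assert (Mx' : M x') by exact Ptx.
    assert (Ex : x = t * x') by (subst x'; gsimplg; reflexivity).
    assert (Hb' : bnd x' n).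
    { rewrite Ex in Hb. destruct (bnd_l Hb Mt Mx' Ht1) as [_ H]. simpl in H.
      rewrite Nat.sub_0_r in H. exact H. }
    assert (Hx'v : x'^-1 * (t^-1 * u * t) * x' = v).
    { rewrite <- Hxuv. subst x'. gsimplg. reflexivity. }
    destruct (IHn x' _ v Mx' Hb' Cut Cv Hx'v) as
      [k [u_ [s_ [K1 [U1 [Uk [UC [SS [Ex' ST]]]]]]]]].
    exists (S k), (fun i => if i <=? 1 then u else u_ (i - 1)),
                  (fun i => if i <=? 1 then t else s_ (i - 1)).
    split; [lia|]. split; [reflexivity|]. split.
    { destruct (Nat.leb_spec (S k) 1); [lia|]. simpl. rewrite Nat.sub_0_r. exact Uk. }
    split.
    { intros i Hi. destruct (Nat.leb_spec i 1). auto. apply UC. lia. }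
    split.
    { intros i Hi. destruct (Nat.leb_spec i 1). auto. split; auto. apply SS. lia. }
    split.
    { destruct k as [|k']; [lia|]. simpl (S (S k') - 1).
      simpl seq. simpl map. rewrite gprod_cons. simpl (1 <=? 1). cbv iota.
      rewrite Ex. f_equal. rewrite Ex'. simpl (S k' - 1). rewrite Nat.sub_0_r.
      rewrite <- (seq_shift k' 1), map_map. f_equal. apply map_ext_in. intros j Hj.
      apply in_seq in Hj. destruct (Nat.leb_spec (S j) 1); [lia|]. simpl. rewrite Nat.sub_0_r. reflexivity. }
    intros i Hi. destruct (Nat.leb_spec i 1).
    + assert (i = 1%nat) by lia. subst i. simpl.
      split. split; auto. symmetry; exact U1.
    + destruct (Nat.leb_spec (i + 1) 1); [lia|].
      replace (i + 1 - 1) with ((i - 1) + 1) by lia. apply ST. lia.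
Qed.
End Garside.

Theorem corollary3p3 (G : Group) (M : G -> Prop) (Delta : G)
  (HG : @is_garside G M Delta) (a u v x : G)
  (Hu : @Csum G M Delta a u) (Hv : @Csum G M Delta a v)
  (Hx : M x) (Hxuv : gmul G (gmul G (ginv G x) u) x = v) :
  exists (k : nat) (u_ s_ : nat -> G),
    1 <= k /\ u_ 1 = u /\ u_ k = v /\
    (forall i, 1 <= i <= k -> @Csum G M Delta a (u_ i)) /\
    (forall i, 1 <= i <= k - 1 -> @simple G M Delta (s_ i)) /\
    x = gprod G (map s_ (seq 1 (k - 1))) /\
    (forall i, 1 <= i <= k - 1 ->
       @Ssum G M Delta a (u_ i) (s_ i) /\
       gmul G (gmul G (ginv G (s_ i)) (u_ i)) (s_ i) = u_ (i + 1)).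
Proof.
  destruct (bound_ex HG x Hx) as [N HN].
  exact (main (a:=a) (n:=N) HG Hx HN Hu Hv Hxuv).
Qed.
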